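(* Let $\mathbb{W}$ be a subgroup of the finite group $\mathbb{W}_1$ that contains the group $\mathbb{W}_1^{\mathfrak{A}}$, and let $G$ be a $\mathbb{W}$-invariant finite subgroup of $\mathbb{T}_1$. Then there exists $n\in\mathbb{N}$ such that one of the following five possibilities holds: \begin{enumerate} \item $G\cong\mu_n^3$; \item $n$ is even and $G\cong\mu_{n}^2\times\mu_{\frac{n}{2}}$; \item $n$ is even and $G\cong\mu_{n}\times\mu_{\frac{n}{2}}^2$; \item $n$ is divisible by $4$ and $G\cong\mu_{n}\times\mu_{\frac{n}{2}}\times\mu_{\frac{n}{4}}$; \item $n$ is divisible by $4$ and $G\cong\mu_{n}\times\mu_{\frac{n}{4}}^2$. \end{enumerate} Here $\mu_k$ denotes the cyclic group of order $k$.
   Context: $M_1=\mathbb{Z}^4/\langle h_1+h_2+h_3+h_4\rangle$, with basis $e_1,e_2,e_3$ the classes of $h_1,h_2,h_3$. The group $\mathfrak{S}_4\times\mu_2$ acts on $M_1$: $\mathfrak{S}_4$ permutes the $h_i$ (so $g(e_i)=e_{g(i)}$ if $g(i)\ne4$ and $-e_1-e_2-e_3$ otherwise) and the generator $\sigma$ of $\mu_2$ acts as $-\mathrm{id}$; the image in $\mathrm{GL}(M_1)\cong\mathrm{GL}_3(\mathbb{Z})$ is denoted $\mathbb{W}_1$, and $\mathbb{W}_1^{\mathfrak{A}}$ is its unique subgroup isomorphic to $\mathfrak{A}_4$ (image of $\mathfrak{A}_4\times\{1\}$). $\mathbb{T}_1=\mathrm{Spec}\,\mathbb{C}[M_1]\cong\mathbb{G}_m^3$,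 on which $\mathrm{GL}(M_1)$ acts by group automorphisms via its action on characters. *)

(* Defs.v *)
From HB Require Import structures.
From mathcomp Require Import all_boot all_order all_algebra all_fingroup.
From mathcomp Require Import finmap.
From mathcomp Require Import reals.
From mathcomp Require Import complex.

Set Implicit Arguments.
Unset Strict Implicit.
Unset Printing Implicit Defensive.

Import GRing.Theory Num.Theory.
Local Open Scope ring_scope.

(* The lattice M_1 = Z^3 (basis e_1,e_2,e_3 = classes of h_1,h_2,h_3);       *)
(* GL(M_1) = GL_3(Z) acting on column coordinate vectors.  The index i of     *)
(* 'I_4 stands for h_(i+1); ord_max (= 3) stands for h_4.                    *)

(* Matrix of g in S_4 acting on M_1: column j is g(e_j), which is            *)
(* e_(g j) if g j <> 4, and -e_1-e_2-e_3 otherwise.                          *)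
Definition permM1 (g : 'S_4) : 'M[int]_3 :=
  \matrix_(i < 3, j < 3)
    (if g (widen_ord (isT : 3 <= 4)%N j) == ord_max then -1
     else ((g (widen_ord (isT : 3 <= 4)%N j) : nat) == (i : nat))%:~R).

(* W_1 = image of S_4 x mu_2 in GL(M_1); sigma acts as -id. *)
Definition in_W1 (A : 'M[int]_3) : Prop :=
  exists (g : 'S_4) (s : bool), A = (-1) ^+ s *: permM1 g.

Definition in_W1A (A : 'M[int]_3) : Prop :=
  exists g : 'S_4, ~~ odd_perm g /\ A = permM1 g.

(* W is a subgroup of W_1 containing W_1^A (W_1 is finite, so a nonempty     *)
(* subset closed under products is a subgroup).                               *)
Definition W_ok (W : 'M[int]_3 -> Prop) : Prop :=
  [/\ forall A, W A -> in_W1 A,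
      forall A, in_W1A A -> W A &
      forall A B, W A -> W B -> W (A *m B)].

(* Points of T_1 = Spec C[M_1] ~ G_m^3: t = (t(e_1), t(e_2), t(e_3)) with     *)
(* nonzero coordinates.  A in GL(M_1) acts on characters, hence on points by  *)
(* t |-> t o A, i.e. (t o A)(e_j) = prod_i t(e_i)^(A i j).                   *)
Section Torus.
Variable R : realType.
Notation C := (R[i]).

Definition tpt (t : 'rV[C]_3) : bool := [forall j, t 0 j != 0].
Definition tmul (s t : 'rV[C]_3) : 'rV[C]_3 := \row_j (s 0 j * t 0 j).
Definition tinv (t : 'rV[C]_3) : 'rV[C]_3 := \row_j (t 0 j)^-1.
Definition tone : 'rV[C]_3 := const_mx 1.
Definition tact (A : 'M[int]_3) (t : 'rV[C]_3) : 'rV[C]_3 :=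
  \row_j \prod_(i < 3) (t 0 i) ^ (A i j).

Definition fin_subgroup (G : {fset 'rV[C]_3}) : Prop :=
  [/\ forall t, t \in G -> tpt t,
      tone \in G,
      forall s t, s \in G -> t \in G -> tmul s t \in G &
      forall t, t \in G -> tinv t \in G].

Definition W_invariant (W : 'M[int]_3 -> Prop) (G : {fset 'rV[C]_3}) : Prop :=
  forall A t, W A -> t \in G -> tact A t \in G.
End Torus.

(* The cyclic group mu_k, modelled as Z/kZ = 'I_k with addition mod k. *)
Lemma ord_pos k (i : 'I_k) : (0 < k)%N.
Proof. exact: leq_ltn_trans (leq0n i) (ltn_ord i). Qed.

Definition addI k (i j : 'I_k) : 'I_k :=
  Ordinal (ltn_pmod (i + j) (ord_pos i)).

Definition add3 a b c (x y : 'I_a * 'I_b * 'I_c) : 'I_a * 'I_b * 'I_c :=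
  (addI x.1.1 y.1.1, addI x.1.2 y.1.2, addI x.2 y.2).

Definition iso_mu3 (R : realType) (G : {fset 'rV[R[i]]_3}) (a b c : nat) : Prop :=
  exists f : 'rV[R[i]]_3 -> 'I_a * 'I_b * 'I_c,
    [/\ {in G &, injective f},
        (forall y, exists2 x, x \in G & f x = y) &
        {in G &, forall s t, f (tmul s t) = add3 (f s) (f t)}].

(* Main.v *)
Require Import Defs.
From HB Require Import structures.
From mathcomp Require Import all_boot all_order all_algebra all_fingroup.
From mathcomp Require Import finmap.
From mathcomp Require Import reals.
From mathcomp Require Import complex.
From mathcomp Require Import all_solvable.
From mathcomp Require Import zify ring.
From Stdlib Require Import Classical.
Set Implicit Arguments.
Unset Strict Implicit.
Unset Printing Implicit Defensive.
Import GRing.Theory Num.Theory.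
Local Open Scope ring_scope.



Lemma prod_mulc (F : comNzRingType) (rs : seq F) z :
  \prod_(y <- rs) (z * y) = z ^+ size rs * \prod_(y <- rs) y.
Proof.
elim: rs => [|a rs IH]; first by rewrite !big_nil mulr1.
by rewrite !big_cons IH /= exprS; rewrite !mulrA; congr (_ * _); rewrite -!mulrA [a * _]mulrC.
Qed.

Lemma lagrange (F : fieldType) (rs : seq F) z : uniq rs -> z \in rs ->
  (forall y, y \in rs -> y != 0) ->
  (forall x y, x \in rs -> y \in rs -> x * y \in rs) ->
  (forall y, y \in rs -> y^-1 \in rs) -> z ^+ size rs = 1.
Proof.
move=> urs zin nz cl inv.
have z0 := nz z zin.
have pe : perm_eq (map (fun y => z * y) rs) rs.
  apply: uniq_perm => //; first by rewrite map_inj_uniq //; exact: mulfI.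
  move=> y; apply/mapP/idP => [[x xin ->]|yin]; first exact: cl.
  by exists (z^-1 * y); [apply: cl => //; apply: inv | rewrite mulrA divff // mul1r].
have E : \prod_(y <- rs) y = z ^+ size rs * \prod_(y <- rs) y.
  by rewrite -prod_mulc -[in LHS](perm_big _ pe) big_map.
have P0 : \prod_(y <- rs) y != 0.
  by rewrite prodf_seq_neq0; apply/allP => y /nz.
by apply: (mulIf P0); rewrite mul1r -E.
Qed.

Section Core.
Variable L : int -> int -> int -> Prop.
Hypothesis H0 : L 0 0 0.
Hypothesis Hsub : forall a1 a2 a3 b1 b2 b3, L a1 a2 a3 -> L b1 b2 b3 ->
  L (a1 - b1) (a2 - b2) (a3 - b3).
Hypothesis Htau : forall a1 a2 a3, L a1 a2 a3 -> L a3 a1 a2.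
Hypothesis Hsig : forall a1 a2 a3, L a1 a2 a3 -> L a2 a1 (- (a1 + a2 + a3)).

Lemma Leq a1 a2 a3 b1 b2 b3 : L a1 a2 a3 -> a1 = b1 -> a2 = b2 -> a3 = b3 -> L b1 b2 b3.
Proof. by move=> h <- <- <-. Qed.

Lemma Hneg a1 a2 a3 : L a1 a2 a3 -> L (- a1) (- a2) (- a3).
Proof. move=> h; apply: Leq (Hsub H0 h) _ _ _; lia. Qed.

Lemma Hadd a1 a2 a3 b1 b2 b3 : L a1 a2 a3 -> L b1 b2 b3 ->
  L (a1 + b1) (a2 + b2) (a3 + b3).
Proof. move=> ha hb; apply: Leq (Hsub ha (Hneg hb)) _ _ _; lia. Qed.

Lemma Hscale (c : int) a1 a2 a3 : L a1 a2 a3 -> L (c * a1) (c * a2) (c * a3).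
Proof.
move=> h.
have hn : forall n : nat, L (n%:Z * a1) (n%:Z * a2) (n%:Z * a3).
  elim=> [|n IH]; first by apply: Leq H0 _ _ _; lia.
  by apply: Leq (Hadd IH h) _ _ _; lia.
case: c => n; first exact: hn.
by apply: Leq (Hneg (hn n.+1)) _ _ _; rewrite NegzE; lia.
Qed.

Lemma Hrho a1 a2 a3 : L a1 a2 a3 -> L a1 a3 (- (a1 + a2 + a3)).
Proof. move=> h; apply: Leq (Hsig (Htau h)) _ _ _; lia. Qed.

Lemma Hnu a1 a2 a3 : L a1 a2 a3 -> L (- (a1 + a2 + a3)) a3 a2.
Proof.
move=> h; apply: Leq (Hsig (Htau (Htau (Hsig (Htau h))))) _ _ _; lia.
Qed.

Lemma Hunit (m c1 c2 c3 : int) : L m 0 0 -> L (m * c1) (m * c2) (m * c3).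
Proof.
move=> h.
have h2 := Htau h; have h3 := Htau h2.
have := Hadd (Hadd (Hscale c1 h) (Hscale c2 h2)) (Hscale c3 h3).
by move/Leq; apply; lia.
Qed.

Lemma parity (m w1 w2 w3 : int) : L (2 * m) 0 0 -> ~ L m 0 0 ->
  L (m * w1) (m * w2) (m * w3) -> (2 %| w2 - w1)%Z /\ (2 %| w3 - w1)%Z.
Proof.
move=> h2m hm hw.
have E1 := divz_eq w1 2; have E2 := divz_eq w2 2; have E3 := divz_eq w3 2.
set q1 := (w1 %/ 2)%Z in E1 *; set q2 := (w2 %/ 2)%Z in E2 *; set q3 := (w3 %/ 2)%Z in E3 *.
have R1 : (w1 %% 2)%Z = 0 \/ (w1 %% 2)%Z = 1 by lia.
have R2 : (w2 %% 2)%Z = 0 \/ (w2 %% 2)%Z = 1 by lia.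
have R3 : (w3 %% 2)%Z = 0 \/ (w3 %% 2)%Z = 1 by lia.
suff : ((w1 %% 2)%Z = (w2 %% 2)%Z) /\ ((w1 %% 2)%Z = (w3 %% 2)%Z).
  move=> [e12 e13]; split; apply/dvdzP.
    by exists (q2 - q1); lia.
  by exists (q3 - q1); lia.
have fin : forall c1 c2 c3, L (m + 2 * m * c1) (2 * m * c2) (2 * m * c3) -> False.
  move=> c1 c2 c3 hb; apply: hm.
  by apply: Leq (Hsub hb (Hunit c1 c2 c3 h2m)) _ _ _; lia.
case: R1 => r1; case: R2 => r2; case: R3 => r3; try (split; lia).
- exfalso; apply: (fin q3 q1 q2).
  by apply: Leq (Htau hw) _ _ _; lia.
- exfalso; apply: (fin q2 q3 q1).
  by apply: Leq (Htau (Htau hw)) _ _ _; lia.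
- exfalso; apply: (fin q2 q1 (- q1 - q2 - q3 - 1)).
  by apply: Leq (Hsig hw) _ _ _; lia.
- exfalso; apply: (fin q1 q2 q3).
  by apply: Leq hw _ _ _; lia.
- exfalso; apply: (fin q1 (- q1 - q2 - q3 - 1) q2).
  by apply: Leq (Hrho (Hrho hw)) _ _ _; lia.
- exfalso; apply: (fin q1 q3 (- q1 - q2 - q3 - 1)).
  by apply: Leq (Hrho hw) _ _ _; lia.
Qed.


Lemma core (p q : int) : L 1 p q -> exists k : nat, (k = 1 \/ k = 2 \/ k = 4)%N /\
  forall a1 a2 a3, L a1 a2 a3 <-> ((k%:Z %| a2 - a1)%Z /\ (k%:Z %| a3 - a1)%Z).
Proof.
move=> hx.
have hz : L 3 (-1) (-1).
  by apply: Leq (Hadd (Hadd hx (Hrho hx)) (Hrho (Hrho hx))) _ _ _; lia.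
have h4 : L 4 0 0 by apply: Leq (Hsub hz (Hnu hz)) _ _ _; lia.
suff [k [hk [hkL hfw]]] : exists k : nat, (k = 1 \/ k = 2 \/ k = 4)%N /\ L k%:Z 0 0 /\
  (forall a1 a2 a3, L a1 a2 a3 -> (k%:Z %| a2 - a1)%Z /\ (k%:Z %| a3 - a1)%Z).
  exists k; split=> // a1 a2 a3; split; first exact: hfw.
  have [/dvdzP [c2 e2] /dvdzP [c3 e3]] := hfw _ _ _ hx.
  move=> [/dvdzP [d2 f2] /dvdzP [d3 f3]].
  have hx' : L 1 (c2 * k + 1) (c3 * k + 1) by apply: Leq hx _ _ _; lia.
  have := Hadd (Hscale a1 hx') (Hunit 0 (d2 - a1 * c2) (d3 - a1 * c3) hkL).
  move/Leq; apply; lia.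
case: (classic (L 1 0 0)) => h1.
  exists 1%N; split; first by left.
  by split=> // a1 a2 a3 _; rewrite !dvd1z.
case: (classic (L 2 0 0)) => h2.
  exists 2%N; split; first by right; left.
  split=> // a1 a2 a3 ha.
  apply: (parity (m := 1)); [apply: Leq h2 _ _ _; lia | done | apply: Leq ha _ _ _; lia].
exists 4%N; split; first by right; right.
split=> // a1 a2 a3 ha.
have [/dvdzP [e2 E2] /dvdzP [e3 E3]] : (2 %| a2 - a1)%Z /\ (2 %| a3 - a1)%Z.
  apply: (parity (m := 2)); [apply: Leq h4 _ _ _; lia | done | exact: Hscale].
have [/dvdzP [f2 F2] /dvdzP [f3 F3]] :
    (2 %| (e2 - e3) - 0)%Z /\ (2 %| (2 * a1 + e2 + 2 * e3) - 0)%Z.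
  apply: (parity (m := 2)); [apply: Leq h4 _ _ _; lia | done | ].
  by apply: Leq (Hsub ha (Hrho ha)) _ _ _; lia.
split; apply/dvdzP; [exists (f3 - a1 - e3) | exists (f3 - a1 - e3 - f2)]; lia.
Qed.

End Core.


Section Tor.
Variable R : realType.
Notation C := (R[i]).

Definition ext (t : 'rV[C]_3) (i : 'I_4) : C :=
  if (i : nat) == 3%N then (t 0 0 * t 0 (inord 1) * t 0 (inord 2))^-1 else t 0 (inord i).

Lemma tact_perm (g : 'S_4) t :
  tact (permM1 g) t = \row_j ext t (g (widen_ord (isT : (3 <= 4)%N) j)).
Proof.
apply/rowP => j; rewrite !mxE /ext.
under eq_bigr => i _ do rewrite mxE.
move: (g _) => w.
case: eqP => [->|wn].
  rewrite eqxx !big_ord_recr big_ord0 /= mul1r !exprN1 !invfM.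
  have -> : (inord 1 : 'I_3) = widen_ord (leqnSn _) ord_max by apply/val_inj; rewrite /= inordK.
  have -> : (inord 2 : 'I_3) = ord_max by apply/val_inj; rewrite /= inordK.
  by congr (_ / _ / _); congr (_^-1); congr (t 0 _); apply/val_inj.
have w3 : (w : nat) != 3%N by apply/eqP => h; apply: wn; apply/val_inj.
rewrite (negPf w3) !big_ord_recr big_ord0 /= mul1r.
move: (ltn_ord w) w3; case: w wn => [[|[|[|[|m]]]] Hw] wn //= _ _.
all: rewrite ?expr1z ?expr0z ?mulr1 ?mul1r; congr (t 0 _); apply/val_inj; rewrite /= ?inordK //.
Qed.

Definition pt (z : C) (a1 a2 a3 : int) : 'rV[C]_3 :=
  \row_(j < 3) z ^ (if (j : nat) == 0%N then a1 else if (j : nat) == 1%N then a2 else a3).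

Definition tau : 'S_4 := tperm (0 : 'I_4) 1 * tperm (1 : 'I_4) 2.
Definition sig : 'S_4 := tperm (0 : 'I_4) 1 * tperm (2 : 'I_4) 3.

Lemma tau_even : ~~ odd_perm tau.
Proof. by rewrite odd_permM !odd_tperm. Qed.
Lemma sig_even : ~~ odd_perm sig.
Proof. by rewrite odd_permM !odd_tperm. Qed.

Lemma ext4 z a1 a2 a3 : z != 0 ->
  (pt z a1 a2 a3 0 0 * pt z a1 a2 a3 0 (inord 1) * pt z a1 a2 a3 0 (inord 2))^-1
  = z ^ (- (a1 + a2 + a3)).
Proof.
move=> z0; rewrite !mxE !inordK //= -!expfzDr // invr_expz. reflexivity.
Qed.

Lemma tact_tau z a1 a2 a3 : z != 0 ->
  tact (permM1 tau) (pt z a1 a2 a3) = pt z a3 a1 a2.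
Proof.
move=> z0; rewrite tact_perm; apply/rowP => j; rewrite !mxE /ext.
case: j => [[|[|[|m]]] Hj] //=; rewrite /tau permM !permE /=.
all: rewrite ?ext4 // !mxE ?inordK //.
Qed.

Lemma tact_sig z a1 a2 a3 : z != 0 ->
  tact (permM1 sig) (pt z a1 a2 a3) = pt z a2 a1 (- (a1 + a2 + a3)).
Proof.
move=> z0; rewrite tact_perm; apply/rowP => j; rewrite !mxE /ext.
case: j => [[|[|[|m]]] Hj] //=; rewrite /sig permM !permE /=.
all: rewrite ?ext4 // !mxE ?inordK //.
Qed.


Lemma zpow_eq (z : C) (n : nat) (x y : int) : z != 0 -> z ^+ n = 1 ->
  (n%:Z %| x - y)%Z -> z ^ x = z ^ y.
Proof.
move=> z0 zn /dvdzP [c e].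
have -> : x = y + n%:Z * c by lia.
by rewrite expfzDr // -exprz_exp -exprnP zn exp1rz mulr1.
Qed.

Lemma iso_of (G : {fset 'rV[C]_3}) a b c
  (g : 'I_a * 'I_b * 'I_c -> 'rV[C]_3) (u0 : 'I_a * 'I_b * 'I_c) :
  injective g -> (forall u, g u \in G) -> (forall t, t \in G -> exists u, g u = t) ->
  (forall u v, g (add3 u v) = tmul (g u) (g v)) -> iso_mu3 G a b c.
Proof.
move=> ginj gG gsurj ghom.
pose f t := odflt u0 [pick u | g u == t].
have fK u : f (g u) = u.
  rewrite /f; case: pickP => [u' /eqP /ginj -> //|/(_ u)]; by rewrite eqxx.
exists f; split.
- move=> s t /gsurj [u <-] /gsurj [v <-]; by rewrite !fK => ->.
- by move=> y; exists (g y); [exact: gG | exact: fK].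
- by move=> s t /gsurj [u <-] /gsurj [v <-]; rewrite -ghom !fK.
Qed.

End Tor.

Theorem corollary7p2 (R : realType) (W : 'M[int]_3 -> Prop)
    (G : {fset 'rV[R[i]]_3}) :
  W_ok W -> fin_subgroup G -> W_invariant W G ->
  exists n : nat,
       iso_mu3 G n n n
    \/ ((2 %| n)%N /\ iso_mu3 G n n (n %/ 2))
    \/ ((2 %| n)%N /\ iso_mu3 G n (n %/ 2) (n %/ 2))
    \/ ((4 %| n)%N /\ iso_mu3 G n (n %/ 2) (n %/ 4))
    \/ ((4 %| n)%N /\ iso_mu3 G n (n %/ 4) (n %/ 4)).
Proof.
move=> [hW1 hWA hWM] [hGpt hG1 hGM hGV] hI.
have Gtau t : t \in G -> tact (permM1 tau) t \in G.
  by apply: hI; apply: hWA; exists tau; split=> //; exact: tau_even.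
have Gsig t : t \in G -> tact (permM1 sig) t \in G.
  by apply: hI; apply: hWA; exists sig; split=> //; exact: sig_even.
pose rs := undup (map (fun t : 'rV[R[i]]_3 => t 0 0) (enum_fset G)).
have rsP y : reflect (exists2 t, t \in G & y = t 0 0) (y \in rs).
  rewrite mem_undup; apply: (iffP mapP) => [[t ht ->]|[t ht ->]]; by exists t.
have nz t j : t \in G -> t 0 j != 0 by move/hGpt => /forallP.
have rs_nz y : y \in rs -> y != 0 by move/rsP => [t ht ->]; exact: nz.
have rs_mul x y : x \in rs -> y \in rs -> x * y \in rs.
  move=> /rsP [s hs ->] /rsP [t ht ->]; apply/rsP; exists (tmul s t).
    exact: hGM.
  by rewrite mxE.
have rs_inv y : y \in rs -> y^-1 \in rs.
  move=> /rsP [t ht ->]; apply/rsP; exists (tinv t); first exact: hGV.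
  by rewrite mxE.
have rs1 : 1 \in rs by apply/rsP; exists (tone R) => //; rewrite mxE.
have urs : uniq rs := undup_uniq _.
set n := size rs.
have n0 : (0 < n)%N by rewrite /n; move: rs1; case: (rs).
have rsn y : y \in rs -> y ^+ n = 1.
  by move=> yin; apply: lagrange.
have [z zin zprim] : exists2 z, z \in rs & n.-primitive_root z.
  apply/hasP; apply: has_prim_root => //.
  by apply/allP => y /rsn yn; rewrite unity_rootE yn.
have z0 : z != 0 := rs_nz _ zin.
have zn : z ^+ n = 1 := prim_expr_order zprim.
have rs_pow y : y \in rs -> exists i : nat, (i < n)%N /\ y = z ^+ i.
  by move=> /rsn /(prim_rootP zprim) [i ->]; exists i.
have tau0 (t : 'rV[R[i]]_3) : (tact (permM1 tau) t) 0 0 = t 0 (inord 2).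
  by rewrite tact_perm mxE /ext /tau permM !permE.
have tau1 (t : 'rV[R[i]]_3) :
    (tact (permM1 tau) (tact (permM1 tau) t)) 0 0 = t 0 (inord 1).
  rewrite tau0 tact_perm mxE (_ : widen_ord _ (inord 2) = 2 :> 'I_4); last first.
    by apply/val_inj; rewrite /= inordK.
  by rewrite /ext /tau permM !permE.
have coord t : t \in G ->
    [/\ t 0 0 \in rs, t 0 (inord 1) \in rs & t 0 (inord 2) \in rs].
  move=> ht; split; apply/rsP.
  - by exists t.
  - by exists (tact (permM1 tau) (tact (permM1 tau) t));
      [exact: (Gtau _ (Gtau _ ht)) | rewrite tau1].
  - by exists (tact (permM1 tau) t); [exact: (Gtau _ ht) | rewrite tau0].
have Gpt t : t \in G -> exists i1 i2 i3 : nat, (i1 < n)%N /\ t = pt z i1 i2 i3.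
  move=> /coord [/rs_pow [i1 [lt1 e1]] /rs_pow [i2 [_ e2]] /rs_pow [i3 [_ e3]]].
  exists i1, i2, i3; split=> //; apply/rowP => j; rewrite mxE.
  case: j => [[|[|[|m]]] Hj] //=; rewrite -exprnP.
  - by rewrite -e1; congr (t 0 _); apply/val_inj.
  - by rewrite -e2; congr (t 0 _); apply/val_inj; rewrite /= inordK.
  - by rewrite -e3; congr (t 0 _); apply/val_inj; rewrite /= inordK.
pose L a1 a2 a3 := pt z a1 a2 a3 \in G.
have ptmul a1 a2 a3 b1 b2 b3 :
    tmul (pt z a1 a2 a3) (pt z b1 b2 b3) = pt z (a1 + b1) (a2 + b2) (a3 + b3).
  by apply/rowP => j; rewrite !mxE; case: ifP => _; [|case: ifP => _]; rewrite expfzDr.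
have ptinv a1 a2 a3 : tinv (pt z a1 a2 a3) = pt z (- a1) (- a2) (- a3).
  by apply/rowP => j; rewrite !mxE; case: ifP => _; [|case: ifP => _]; rewrite invr_expz.
have pt0 : pt z 0 0 0 = tone R by apply/rowP => j; rewrite !mxE !if_same expr0z.
have L0 : L 0 0 0 by rewrite /L pt0.
have Lsub a1 a2 a3 b1 b2 b3 : L a1 a2 a3 -> L b1 b2 b3 ->
    L (a1 - b1) (a2 - b2) (a3 - b3).
  move=> ha hb; rewrite /L (_ : pt z (a1 - b1) (a2 - b2) (a3 - b3) =
      tmul (pt z a1 a2 a3) (tinv (pt z b1 b2 b3))); last by rewrite ptinv ptmul.
  by apply: hGM => //; apply: hGV.
have Ltau a1 a2 a3 : L a1 a2 a3 -> L a3 a1 a2.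
  by move=> h; rewrite /L -tact_tau //; exact: Gtau.
have Lsig a1 a2 a3 : L a1 a2 a3 -> L a2 a1 (- (a1 + a2 + a3)).
  by move=> h; rewrite /L -tact_sig //; exact: Gsig.
have [p [q Lx]] : exists p q, L 1 p q.
  have [t ht zt] := rsP _ zin; have [i1 [i2 [i3 [_ et]]]] := Gpt t ht.
  exists i2, i3; rewrite /L (_ : pt z 1 i2 i3 = t) //.
  have zi : z = z ^ i1 by rewrite {1}zt et mxE.
  by apply/rowP => j; rewrite et !mxE; case: ifP => // _; rewrite expr1z.
have [k [hk hL]] := core L0 Lsub Ltau Lsig Lx.
have kn : (k %| n)%N.
  have : L n 0 0.
    rewrite /L (_ : pt z n 0 0 = tone R) //; apply/rowP => j; rewrite !mxE.
    by case: ifP => _; [rewrite -exprnP zn | rewrite !if_same expr0z].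
  by move/hL => [+ _]; rewrite dvdzE sub0r abszN.
have k0 : (0 < k)%N by case: hk => [->|[->|->]].
set b := (n %/ k)%N.
have nkb : n = (k * b)%N by rewrite /b mulnC divnK.
have b0 : (0 < b)%N by rewrite /b divn_gt0 // dvdn_leq.
pose g (u : 'I_n * 'I_b * 'I_b) :=
  pt z u.1.1 (u.1.1 + k * u.1.2)%N (u.1.1 + k * u.2)%N.
have zinj (a a' : nat) : z ^ (a : int) = z ^ (a' : int) -> a = a' %[mod n].
  by rewrite -!exprnP => /eqP; rewrite (eq_prim_root_expr zprim) => /eqP.
have iso : iso_mu3 G n b b.
  apply: (@iso_of R G n b b g (Ordinal n0, Ordinal b0, Ordinal b0)).
  - move=> [[i j] l] [[i' j'] l'] /rowP e.
    have e0 := e 0; have e1 := e (inord 1); have e2 := e (inord 2).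
    rewrite !mxE ?inordK //= in e0 e1 e2.
    have ii : i = i'.
      by apply/val_inj; move: (zinj _ _ e0); rewrite !modn_small.
    subst i'.
    have hjj (x x' : 'I_b) : z ^ ((i + k * x)%N : int) = z ^ ((i + k * x')%N : int) -> x = x'.
      move/zinj/eqP; rewrite eqn_modDl nkb -!muln_modr eqn_pmul2l //.
      by rewrite !modn_small // => /eqP xx; apply/val_inj.
    by rewrite (hjj _ _ e1) (hjj _ _ e2).
  - move=> [[i j] l]; apply/hL; split; apply/dvdzP; [exists (j : nat)%:Z | exists (l : nat)%:Z]; rewrite /= ; lia.
  - move=> t ht; have [i1 [i2 [i3 [lt1 et]]]] := Gpt t ht.
    have hLi : L i1 i2 i3 by rewrite /L -et.
    have [/dvdzP [c2 E2] /dvdzP [c3 E3]] := (hL i1 i2 i3).1 hLi.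
    have mb (c : int) : (`|(c %% b)%Z|%N < b)%N.
      rewrite -ltz_nat gez0_abs; [apply: ltz_pmod; lia | apply: modz_ge0; lia].
    have Ab (c : int) : (`|(c %% b)%Z|%N : int) = (c %% b)%Z.
      by rewrite gez0_abs //; apply: modz_ge0; lia.
    exists (Ordinal lt1, Ordinal (mb c2), Ordinal (mb c3)).
    have key (c : int) (i i' : nat) : (i'%:Z - i%:Z = c * k%:Z) ->
        z ^ ((i + k * `|(c %% b)%Z|%N)%N : int) = z ^ (i' : int).
      move=> Ec; apply: (zpow_eq z0 zn); apply/dvdzP; exists (- (c %/ b)%Z).
      have Ec' : c * k%:Z = (c %/ b)%Z * b%:Z * k%:Z + (c %% b)%Z * k%:Z.
        by rewrite {1}(divz_eq c b) mulrDl.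
      have Eb : (c %/ b)%Z * n%:Z = (c %/ b)%Z * b%:Z * k%:Z.
        by rewrite nkb PoszM; ring.
      have := Ab c; lia.
    rewrite et; apply/rowP => j; rewrite !mxE /=.
    case: ifP => _; [done | case: ifP => _]; exact: key.
  - move=> [[i j] l] [[i' j'] l']; rewrite /g /add3 ptmul /=.
    apply/rowP => x; rewrite !mxE.
    have F1 := divn_eq (i + i') n; have F2 := divn_eq (j + j') b.
    have F3 := divn_eq (l + l') b.
    have G2 : (k * (j + j') = k * ((j + j') %/ b * b) + k * ((j + j') %% b))%N.
      by rewrite {1}F2 mulnDr.
    have G3 : (k * (l + l') = k * ((l + l') %/ b * b) + k * ((l + l') %% b))%N.
      by rewrite {1}F3 mulnDr.
    have H1 : ((i + i') %/ n * n = (i + i') %/ n * k * b)%N by rewrite -mulnA -nkb.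
    have H2 : ((j + j') %/ b * n = (j + j') %/ b * k * b)%N by rewrite -mulnA -nkb.
    have H3 : ((l + l') %/ b * n = (l + l') %/ b * k * b)%N by rewrite -mulnA -nkb.
    move: F1 F2 F3 G2 G3 H1 H2 H3.
    move: ((i + i') %/ n)%N ((i + i') %% n)%N ((j + j') %/ b)%N ((j + j') %% b)%N
      ((l + l') %/ b)%N ((l + l') %% b)%N => q1 r1 q2 r2 q3 r3 F1 F2 F3 G2 G3 H1 H2 H3.
    case: ifP => _; [|case: ifP => _]; apply: (zpow_eq z0 zn); apply/dvdzP.
    + by exists (- (q1 : int)); lia.
    + by exists (- (q1 + q2 : int)); lia.
    + by exists (- (q1 + q3 : int)); lia.
case: hk => [ek|[ek|ek]]; rewrite /b ek in iso; exists n.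
- by left; rewrite divn1 in iso.
- by right; right; left; split => //; rewrite -ek.
- by right; right; right; right; split => //; rewrite -ek.
Qed.
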